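(* Let $G$ be a discrete abelian group, let $X,Y$ be independent finitely supported $G$-valued random variables with $\mathbb{H}(X+Y)-\mathbb{H}(Y)\le\frac1{16}$, and let $\epsilon\in(0,1)$. Let $B=B(\mathrm{LSpec}(Y,\epsilon),4\epsilon)$. Let $Z$ be another finitely supported $G$-valued random variable. Then there is a set $S\subset\operatorname{supp}(X)$ such that $\log|S|\ge \mathbb{H}(Z)-4\,\mathrm{d}[X;Z]-2\log 2$ and $S-S\subset B$.
   Context: $\log$ is natural. $\mathbb{H}(X)=\sum_x p_X(x)\log(1/p_X(x))$ with $p_X(x)=\mathbb{P}(X=x)$. $\mathrm{d}[X;Z]=\mathbb{H}(X'-Z')-\tfrac12\mathbb{H}(X)-\tfrac12\mathbb{H}(Z)$ with $X',Z'$ independent copies of $X,Z$. $\hat G$ is the group of homomorphisms $G\to S^1=\{z\in\mathbb{C}:|z|=1\}$, and for $f\in\ell^1(G)$, $\hat f(\gamma)=\sum_{x\in G}f(x)\overline{\gamma(x)}$. $\mathrm{LSpec}(Y,\epsilon)=\{\gamma\in\hat G:|\hat{p_Y}(\gamma)|^2\ge 1-\epsilon^2/2\}$. For $\Gamma\subset\hat G$ and $\delta\in(0,2]$ (or larger), the Bohr set is $B(\Gamma,\delta)=\{x\in G:|\gamma(x)-1|\le\delta\text{ for all }\gamma\in\Gamma\}$. $S-S=\{s-s':s,s'\in S\}$. *)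

(* Defs.v *)
From HB Require Import structures.
From mathcomp Require Import all_boot all_order all_algebra.
From mathcomp Require Import all_classical all_reals.
From mathcomp Require Import exp.
From mathcomp Require Import complex.
Set Implicit Arguments. Unset Strict Implicit. Unset Printing Implicit Defensive.
Import Order.TTheory GRing.Theory Num.Theory.
Local Open Scope classical_set_scope.
Local Open Scope ring_scope.

Section Defs.
Variables (R : realType) (G : zmodType).

Definition supp (p : G -> R) : set G := [set x | p x != 0].

(* p is the law of a finitely supported G-valued random variable. *)
Definition is_fdist (p : G -> R) : Prop :=
  [/\ forall x, 0 <= p x, finite_set (supp p) & \sum_(x \in supp p) p x = 1].

Definition entropy (p : G -> R) : R := \sum_(x \in supp p) p x * ln (p x)^-1.

(* Law of X + Y for independent X ~ p, Y ~ q. *)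
Definition conv (p q : G -> R) (z : G) : R := \sum_(x \in supp p) p x * q (z - x).

(* Law of X' - Z' for independent X' ~ p, Z' ~ q. *)
Definition diff_law (p q : G -> R) (w : G) : R := \sum_(x \in supp p) p x * q (x - w).

Definition rdist (p q : G -> R) : R :=
  entropy (diff_law p q) - entropy p / 2 - entropy q / 2.

Definition is_character (g : G -> R[i]) : Prop :=
  (forall x y, g (x + y) = g x * g y) /\ (forall x, Normc.normc (g x) = 1).

Definition fourier (p : G -> R) (g : G -> R[i]) : R[i] :=
  \sum_(x \in supp p) real_complex R (p x) * conjc (g x).

Definition LSpec (p : G -> R) (eps : R) : set (G -> R[i]) :=
  [set g | is_character g /\ 1 - eps ^+ 2 / 2 <= Normc.normc (fourier p g) ^+ 2].

Definition Bohr (Gam : set (G -> R[i])) (delta : R) : set G :=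
  [set x | forall g, Gam g -> Normc.normc (g x - 1) <= delta].

End Defs.

(* Main.v *)
Require Import Defs.
From HB Require Import structures.
From mathcomp Require Import all_boot all_order all_algebra.
From mathcomp Require Import all_classical all_reals.
From mathcomp Require Import exp.
From mathcomp Require Import complex.
From mathcomp Require Import finmap.
From mathcomp Require Import ring lra.
Import Order.TTheory GRing.Theory Num.Theory.
Local Open Scope classical_set_scope.
Local Open Scope ring_scope.
Set Implicit Arguments. Unset Strict Implicit. Unset Printing Implicit Defensive.
Section Gen.
Variables (R : realType) (G : zmodType).

Lemma sum_split (V : nmodType) (s U : seq G) (f : G -> V) : uniq s -> uniq U -> {subset s <= U} ->
  \sum_(z <- U) f z = \sum_(z <- s) f z + \sum_(z <- U | z \notin s) f z.
Proof.
move=> us uU sU; rewrite (bigID (fun z => z \in s)) /=; congr (_ + _).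
rewrite -big_filter; apply: perm_big; apply: uniq_perm => //; first exact: filter_uniq.
by move=> z; rewrite mem_filter; apply/andP/idP => [[]//|zs]; split => //; apply: sU.
Qed.

Lemma sum_widen (V : nmodType) (s U : seq G) (f : G -> V) : uniq s -> uniq U -> {subset s <= U} ->
  (forall z, z \in U -> z \notin s -> f z = 0) ->
  \sum_(z <- s) f z = \sum_(z <- U) f z.
Proof.
move=> us uU sU f0; rewrite (sum_split f us uU sU) [X in _ = _ + X]big1_seq ?addr0 //.
by move=> z /andP[zs zU]; apply: f0.
Qed.

Lemma sum_sub_le (s U : seq G) (f : G -> R) : uniq s -> uniq U -> {subset s <= U} ->
  (forall z, z \in U -> 0 <= f z) ->
  \sum_(z <- s) f z <= \sum_(z <- U) f z.
Proof.
move=> us uU sU f0; rewrite (sum_split f us uU sU) lerDl.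
by rewrite big_seq_cond; apply: sumr_ge0 => z /andP[zU _]; apply: f0.
Qed.

Lemma reindex_sum (V : nmodType) (L U : seq G) (h : G -> G) (F : G -> V) :
  uniq L -> uniq U -> injective h -> (forall c, c \in L -> h c \in U) ->
  (forall v, v \in U -> v \notin map h L -> F v = 0) ->
  \sum_(v <- U) F v = \sum_(c <- L) F (h c).
Proof.
move=> uL uU ih hLU F0; rewrite -(big_map h xpredT F); symmetry; apply: sum_widen => //.
- by rewrite map_inj_uniq.
- by move=> v /mapP[c cL ->]; apply: hLU.
Qed.

Lemma fsum_seq (V : nmodType) (f : G -> R) (F : G -> V) (L : seq G) : uniq L ->
  (forall x, f x != 0 -> x \in L) -> (forall x, f x = 0 -> F x = 0) ->
  \sum_(x \in supp f) F x = \sum_(x <- L) F x.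
Proof.
move=> uL fL F0; apply: fsbig_fwiden => //.
- move=> x [/= xL]; rewrite /supp /= => /negP; rewrite negbK => /eqP fx.
  by apply: F0.
Qed.

Definition sup (p : G -> R) : seq G := fset_set (supp p).

Lemma sup_uniq p : uniq (sup p).
Proof. exact: fset_uniq. Qed.

Lemma mem_sup p x : is_fdist p -> (x \in sup p) = (p x != 0).
Proof.
case=> _ fin _; rewrite /sup in_fset_set //.
by apply/idP/idP => [/set_mem|h]; [|apply/mem_set].
Qed.

Lemma sum_sup p : is_fdist p -> \sum_(x <- sup p) p x = 1.
Proof.
move=> hp; have := hp; case=> _ _ <-; symmetry; apply: fsum_seq.
- exact: sup_uniq.
- by move=> x; rewrite mem_sup.
- by [].
Qed.

Lemma sup_gt0 p x : is_fdist p -> x \in sup p -> 0 < p x.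
Proof. move=> hp; rewrite mem_sup // => h; case: hp => h0 _ _; by rewrite lt0r h h0. Qed.

Lemma entropy_seq (p : G -> R) (L : seq G) : uniq L -> (forall x, p x != 0 -> x \in L) ->
  entropy p = \sum_(x <- L) p x * ln (p x)^-1.
Proof. by move=> uL pL; apply: fsum_seq => // x ->; rewrite mul0r. Qed.

End Gen.
Section Pt.
Variable R : realType.
Implicit Types a b : R.

Lemma ln_le_sub1 (x : R) : 0 < x -> ln x <= x - 1.
Proof.
move=> x0; have := @le_ln1Dx R (x - 1).
have -> : 1 + (x - 1) = x by ring.
by apply; lra.
Qed.

Lemma gibbs_pt a b : 0 <= a -> 0 <= b -> (0 < a -> 0 < b) -> a - b <= a * (ln a - ln b).
Proof.
move=> a0 b0 ab; have [->|apos] := eqVneq a 0; first by rewrite mul0r sub0r oppr_le0.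
have a1 : 0 < a by rewrite lt0r apos.
have b1 := ab a1.
have := ln_le_sub1 (divr_gt0 b1 a1); rewrite ln_div ?posrE //.
move=> h; have : a * (ln b - ln a) <= a * (b / a - 1) by rewrite ler_pM2l.
have -> : a * (b / a - 1) = b - a.
  by rewrite mulrBr mulr1 mulrCA divff ?mulr1 // gt_eqF.
lra.
Qed.

Lemma tv_pt a b : 0 <= a -> 0 <= b -> (0 < a -> 0 < b) ->
  `|a - b| <= 3 * (a * (ln a - ln b) + b - a) + (a + b) / 6.
Proof.
move=> a0 b0 ab; have [->|apos] := eqVneq a 0.
  by rewrite mul0r sub0r normrN ger0_norm //; lra.
have a1 : 0 < a by rewrite lt0r apos.
have b1 := ab a1.
set u := Num.sqrt a; set v := Num.sqrt b.
have u0 : 0 < u by rewrite sqrtr_gt0.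
have v0 : 0 < v by rewrite sqrtr_gt0.
have ua : a = u ^+ 2 by rewrite sqr_sqrtr // ltW.
have vb : b = v ^+ 2 by rewrite sqr_sqrtr // ltW.
have hl : ln b - ln a = 2 * (ln v - ln u).
  by rewrite ua vb !lnXn // -mulr_natl; lra.
have hvu := ln_le_sub1 (divr_gt0 v0 u0); rewrite ln_div ?posrE // in hvu.
have key : a * (ln a - ln b) >= 2 * u ^+ 2 - 2 * u * v.
  have : u ^+ 2 * (ln v - ln u) <= u ^+ 2 * (v / u - 1) by rewrite ler_pM2l ?exprn_gt0.
  have -> : u ^+ 2 * (v / u - 1) = u * v - u ^+ 2.
    by field; rewrite gt_eqF.
  have -> : ln a - ln b = -(2 * (ln v - ln u)) by rewrite -hl opprB.
  rewrite {1}ua; nra.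
have -> : a - b = (u - v) * (u + v) by rewrite ua vb; ring.
rewrite normrM (ger0_norm (addr_ge0 (ltW u0) (ltW v0))).
rewrite ua vb in key *.
have hw : 0 <= `|u - v| by [].
have hsq : `|u - v| ^+ 2 = (u - v) ^+ 2 by rewrite real_normK // num_real.
have h1 : `|u - v| * (u + v) <= 3 * `|u - v| ^+ 2 + (u + v) ^+ 2 / 12.
  have := sqr_ge0 (`|u - v| - (u + v) / 6); nra.
have h2 : (u + v) ^+ 2 <= 2 * (u ^+ 2 + v ^+ 2) by have := sqr_ge0 (u - v); nra.
move: key; set L := _ * (ln _ - ln _); move=> key.
rewrite hsq in h1; nra.
Qed.

End Pt.
Section Part2.
Variables (R : realType) (G : zmodType) (p pz : G -> R).
Hypotheses (hp : is_fdist p) (hz : is_fdist pz).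

Let A := sup p.
Let C := sup pz.
Let w := diff_law p pz.
Let V := undup [seq x - c | x <- A, c <- C].

Lemma p_ge0 x : 0 <= p x. Proof. by case: hp. Qed.
Lemma pz_ge0 x : 0 <= pz x. Proof. by case: hz. Qed.

Lemma w_seq v : w v = \sum_(x <- A) p x * pz (x - v).
Proof.
apply: fsum_seq; first exact: sup_uniq.
- by move=> x; rewrite mem_sup.
- by move=> x ->; rewrite mul0r.
Qed.

Lemma w_ge0 v : 0 <= w v.
Proof. by rewrite w_seq; apply: sumr_ge0 => x _; rewrite mulr_ge0 ?p_ge0 ?pz_ge0. Qed.

Lemma w_ge_term x v : x \in A -> p x * pz (x - v) <= w v.
Proof.
move=> xA; rewrite w_seq (bigD1_seq x) ?sup_uniq //= lerDl.
by apply: sumr_ge0 => y _; rewrite mulr_ge0 ?p_ge0 ?pz_ge0.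
Qed.

Lemma V_uniq : uniq V. Proof. exact: undup_uniq. Qed.

Lemma mem_V x c : x \in A -> c \in C -> x - c \in V.
Proof. by move=> xA cC; rewrite mem_undup; apply: (allpairs_f (fun x c => x - c)). Qed.

Lemma w_V v : w v != 0 -> v \in V.
Proof.
rewrite w_seq => h.
have : has (fun x => p x * pz (x - v) != 0) A.
  apply/negPn/negP => /hasPn H; move/negP: h; apply; apply/eqP.
  by apply: big1_seq => x /andP[_ xA]; apply/eqP/negPn; exact: H x xA.
case/hasP => x xA; rewrite mulf_eq0 negb_or => /andP[_ hz0].
have -> : v = x - (x - v) by rewrite opprB addrC subrK.
by apply: mem_V => //; rewrite mem_sup.
Qed.

Lemma pz_reindex x (g : G -> R) : x \in A ->
  \sum_(v <- V) pz (x - v) * g v = \sum_(c <- C) pz c * g (x - c).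
Proof.
move=> xA; rewrite (@reindex_sum _ _ C V (fun c => x - c)).
- by apply: eq_bigr => c _; rewrite opprB addrC subrK.
- exact: sup_uniq.
- exact: V_uniq.
- by move=> c c' /addrI /oppr_inj.
- by move=> c cC; apply: mem_V.
- move=> v vV; apply: contraNeq; rewrite mulf_eq0 negb_or => /andP[h _].
  apply/mapP; exists (x - v); first by rewrite mem_sup.
  by rewrite opprB addrC subrK.
Qed.

Lemma sum_w : \sum_(v <- V) w v = 1.
Proof.
under eq_bigr do rewrite w_seq.
rewrite exchange_big /= -(sum_sup hp); apply: eq_big_seq => x xA.
rewrite -mulr_sumr; have := pz_reindex (fun=> 1) xA.
under eq_bigr do rewrite mulr1.
move=> ->; under eq_bigr do rewrite mulr1.
by rewrite sum_sup // mulr1.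
Qed.

Lemma sum_w_C x : x \in A -> \sum_(c <- C) w (x - c) <= 1.
Proof.
move=> xA; rewrite -sum_w -(big_map (fun c => x - c) xpredT w).
apply: sum_sub_le.
- by rewrite map_inj_uniq ?sup_uniq // => c c' /addrI /oppr_inj.
- exact: V_uniq.
- by move=> v /mapP[c cC ->]; apply: mem_V.
- by move=> v _; apply: w_ge0.
Qed.

Lemma sum_w_L (L : seq G) c : uniq L -> {subset L <= A} -> c \in C ->
  \sum_(x <- L) w (x - c) <= 1.
Proof.
move=> uL LA cC; rewrite -sum_w -(big_map (fun x => x - c) xpredT w).
apply: sum_sub_le.
- by rewrite map_inj_uniq // => y y' /addIr.
- exact: V_uniq.
- by move=> v /mapP[y yL ->]; apply: mem_V => //; apply: LA.
- by move=> v _; apply: w_ge0.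
Qed.

Definition E x := \sum_(c <- C) pz c * ln (w (x - c))^-1.

Lemma Hw_E : entropy w = \sum_(x <- A) p x * E x.
Proof.
rewrite (entropy_seq V_uniq w_V).
under eq_bigr do rewrite w_seq mulr_suml.
rewrite exchange_big /=; apply: eq_big_seq => x xA.
rewrite /E -(pz_reindex (fun v => ln (w v)^-1)) // mulr_sumr.
by apply: eq_bigr => v _; rewrite -w_seq mulrA.
Qed.

Lemma w_pos x c : x \in A -> c \in C -> 0 < w (x - c).
Proof.
move=> xA cC; apply: lt_le_trans (w_ge_term (x - c) xA).
by rewrite opprB addrC subrK mulr_gt0 // sup_gt0.
Qed.

Lemma Hz_seq : entropy pz = \sum_(c <- C) pz c * ln (pz c)^-1.
Proof. by apply: entropy_seq; [exact: sup_uniq | move=> c; rewrite mem_sup]. Qed.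

Lemma Hp_seq : entropy p = \sum_(x <- A) p x * ln (p x)^-1.
Proof. by apply: entropy_seq; [exact: sup_uniq | move=> c; rewrite mem_sup]. Qed.

Lemma LemS x : x \in A -> entropy pz <= E x.
Proof.
move=> xA.
have H : \sum_(c <- C) (pz c * ln (pz c)^-1 + pz c - w (x - c)) <= E x.
  rewrite /E big_seq [X in _ <= X]big_seq; apply: ler_sum => c cC.
  have a0 := sup_gt0 hz cC; have b0 := w_pos xA cC.
  rewrite !lnV ?posrE //.
  have := gibbs_pt (ltW a0) (ltW b0) (fun _ => b0); nra.
rewrite big_split /= sumrN big_split /= sum_sup // -Hz_seq in H.
have := sum_w_C xA; lra.
Qed.

Lemma LemT (L : seq G) : uniq L -> {subset L <= A} ->
  \sum_(x <- L) p x * ln (p x)^-1 + (\sum_(x <- L) p x) * ln (\sum_(x <- L) p x)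
  <= \sum_(x <- L) p x * E x.
Proof.
move=> uL LA; set b := \sum_(x <- L) p x.
have b0 : 0 <= b by apply: sumr_ge0 => x _; apply: p_ge0.
have -> : \sum_(x <- L) p x * E x =
    \sum_(c <- C) pz c * \sum_(x <- L) p x * ln (w (x - c))^-1.
  rewrite /E; under eq_bigr do rewrite mulr_sumr.
  rewrite exchange_big /=; apply: eq_bigr => c _; rewrite mulr_sumr.
  by apply: eq_bigr => x _; rewrite mulrCA.
set K := _ + _.
have -> : K = \sum_(c <- C) pz c * K by rewrite -mulr_suml sum_sup // mul1r.
rewrite big_seq [X in _ <= X]big_seq; apply: ler_sum => c cC.
rewrite ler_pM2l ?sup_gt0 //.
have H : \sum_(x <- L) (p x * ln (p x)^-1 + p x * ln b + p x - b * w (x - c))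
   <= \sum_(x <- L) p x * ln (w (x - c))^-1.
  rewrite big_seq [X in _ <= X]big_seq; apply: ler_sum => x xL.
  have xA := LA x xL.
  have a0 := sup_gt0 hp xA; have w0 := w_pos xA cC.
  have bp : 0 < b.
    apply: lt_le_trans a0 _; rewrite /b (bigD1_seq x) //= lerDl.
    by apply: sumr_ge0 => y _; apply: p_ge0.
  rewrite !lnV ?posrE //.
  have := gibbs_pt (ltW a0) (ltW (mulr_gt0 bp w0)) (fun _ => mulr_gt0 bp w0).
  rewrite lnM ?posrE //; nra.
rewrite big_split /= sumrN !big_split /= -!mulr_suml -mulr_sumr -/b in H.
have := sum_w_L uL LA cC; rewrite /K; nra.
Qed.

Lemma sum_cst (s : seq G) (k : R) : \sum_(x <- s) k = k *+ size s.
Proof. by elim: s => [|y s IH]; rewrite ?big_nil // big_cons IH mulrS. Qed.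

Lemma Hs_bound (L : seq G) : uniq L -> {subset L <= A} -> L != [::] ->
  \sum_(x <- L) p x * ln (p x)^-1 <=
  (\sum_(x <- L) p x) * ln (size L)%:R - (\sum_(x <- L) p x) * ln (\sum_(x <- L) p x).
Proof.
move=> uL LA L0; set a := \sum_(x <- L) p x; set n := (size L)%:R.
have n0 : 0 < n :> R by rewrite /n ltr0n lt0n size_eq0.
have ap : 0 < a.
  have [y yL] : exists y, y \in L by case: (L) L0 => // y ? _; exists y; rewrite mem_head.
  apply: lt_le_trans (sup_gt0 hp (LA y yL)) _; rewrite /a (bigD1_seq y) //= lerDl.
  by apply: sumr_ge0 => z _; apply: p_ge0.
have H : \sum_(x <- L) (p x - a / n) <= \sum_(x <- L) p x * (ln (p x) - (ln a - ln n)).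
  rewrite big_seq [X in _ <= X]big_seq; apply: ler_sum => x xL.
  have a0 := sup_gt0 hp (LA x xL).
  have := gibbs_pt (ltW a0) (ltW (divr_gt0 ap n0)) (fun _ => divr_gt0 ap n0).
  by rewrite ln_div ?posrE.
rewrite sumrB sum_cst -/a in H.
have e : a / n *+ size L = a by rewrite -mulr_natr mulfVK // gt_eqF.
rewrite e in H.
have e2 : \sum_(x <- L) p x * (ln (p x) - (ln a - ln n)) =
   \sum_(x <- L) p x * ln (p x) - a * ln a + a * ln n.
  rewrite /a !mulr_suml -sumrB -big_split /=; apply: eq_bigr => x _; ring.
have e3 : \sum_(x <- L) p x * ln (p x)^-1 = - \sum_(x <- L) p x * ln (p x).
  rewrite -sumrN; apply: eq_big_seq => x xL.
  by rewrite lnV ?posrE ?sup_gt0 ?mulrN //; apply: LA.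
rewrite e2 in H; rewrite e3; lra.
Qed.

Lemma binary_ent (a b : R) : 0 < a -> 0 <= b -> a + b = 1 -> - ln 2 <= a * ln a + b * ln b.
Proof.
move=> a0 b0 ab.
have h2 : 0 < 2^-1 :> R by rewrite invr_gt0.
have := gibbs_pt (ltW a0) (ltW h2) (fun _ => h2).
have := gibbs_pt b0 (ltW h2) (fun _ => h2).
rewrite lnV ?posrE // => h1 h3; nra.
Qed.


Lemma part2 (P : pred G) :
  [seq x <- A | P x] != [::] -> 1/2 <= \sum_(x <- [seq x <- A | P x]) p x ->
  entropy pz - 4 * rdist p pz - 2 * ln 2 <= ln (size [seq x <- A | P x])%:R.
Proof.
set S0 := [seq x <- A | P x]; set T := [seq x <- A | ~~ P x] => S00 ha.
have split (f : G -> R) : \sum_(x <- A) f x = \sum_(x <- S0) f x + \sum_(x <- T) f x.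
  by rewrite [LHS](bigID P) /= /S0 /T !big_filter.
have uA : uniq A by apply: sup_uniq.
have uS : uniq S0 by apply: filter_uniq.
have uT : uniq T by apply: filter_uniq.
have SA : {subset S0 <= A} by move=> x; rewrite mem_filter => /andP[].
have TA : {subset T <= A} by move=> x; rewrite mem_filter => /andP[].
set a := \sum_(x <- S0) p x; set b := \sum_(x <- T) p x.
have ab : a + b = 1 by rewrite -split sum_sup.
have b0 : 0 <= b by apply: sumr_ge0 => x _; apply: p_ge0.
have Hw1 : entropy w = \sum_(x <- S0) p x * E x + \sum_(x <- T) p x * E x.
  by rewrite Hw_E split.
have X1 : a * entropy pz <= \sum_(x <- S0) p x * E x.
  rewrite /a mulr_suml big_seq [X in _ <= X]big_seq; apply: ler_sum => x xS.
  by rewrite ler_wpM2l ?p_ge0 // LemS // SA.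
have X2 := LemT uT TA; rewrite -/b in X2.
have X3 : entropy pz <= entropy w.
  rewrite Hw_E -[entropy pz]mul1r -(sum_sup hp) mulr_suml big_seq [X in _ <= X]big_seq.
  by apply: ler_sum => x xA; rewrite ler_wpM2l ?p_ge0 // LemS.
have X4 : entropy p <= entropy w.
  have := LemT uA (fun x h => h); rewrite sum_sup // ln1 mulr0 addr0 -Hp_seq Hw_E //.
have X5 : entropy p = \sum_(x <- S0) p x * ln (p x)^-1 + \sum_(x <- T) p x * ln (p x)^-1.
  by rewrite Hp_seq split.
have X6 := Hs_bound uS SA S00; rewrite -/a in X6.
have a0 : 0 < a by apply: lt_le_trans ha; rewrite divr_gt0.
have X7 := binary_ent a0 b0 ab.
have l2 : 0 <= ln 2 :> R by apply: ln_ge0; rewrite ler1n.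
rewrite /rdist -/w.
set Hz := entropy pz; set Hp := entropy p; set Hw := entropy w; set Ln := ln (size S0)%:R.
rewrite -/Hz in X1 X3; rewrite -/Hw in Hw1 X3 X4; rewrite -/Hp in X4 X5.
rewrite -/Ln in X6.
set d := Hw - Hp / 2 - Hz / 2.
have d0 : 0 <= d by rewrite /d; lra.
have K : a * Hz - 2 * d - ln 2 <= a * Ln by rewrite /d; lra.
have M : 0 <= (2 * a - 1) * (2 * d + ln 2).
  by apply: mulr_ge0; rewrite -/a in ha; lra.
have : 0 <= a * (Ln - Hz + 4 * d + 2 * ln 2) by nra.
rewrite pmulr_rge0 //; lra.
Qed.

End Part2.
Section Part1.
Variables (R : realType) (G : zmodType) (p q : G -> R).
Hypotheses (hp : is_fdist p) (hq : is_fdist q).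

Let A := sup p.
Let B := sup q.
Let r := conv p q.
Let U := undup [seq x + y | x <- A, y <- B].

Lemma p_ge0' x : 0 <= p x. Proof. by case: hp. Qed.
Lemma q_ge0 x : 0 <= q x. Proof. by case: hq. Qed.

Lemma lnV0 (x : R) : 0 <= x -> ln x^-1 = - ln x.
Proof.
rewrite le0r => /orP[/eqP->|x0]; first by rewrite invr0 ln0 // oppr0.
by rewrite lnV.
Qed.

Lemma r_seq z : r z = \sum_(x <- A) p x * q (z - x).
Proof.
apply: fsum_seq; first exact: sup_uniq.
- by move=> x; rewrite mem_sup.
- by move=> x ->; rewrite mul0r.
Qed.

Lemma r_ge0 z : 0 <= r z.
Proof. by rewrite r_seq; apply: sumr_ge0 => x _; rewrite mulr_ge0 ?p_ge0' ?q_ge0. Qed.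

Lemma r_ge_term x z : x \in A -> p x * q (z - x) <= r z.
Proof.
move=> xA; rewrite r_seq (bigD1_seq x) ?sup_uniq //= lerDl.
by apply: sumr_ge0 => y _; rewrite mulr_ge0 ?p_ge0' ?q_ge0.
Qed.

Lemma U_uniq : uniq U. Proof. exact: undup_uniq. Qed.

Lemma mem_U x y : x \in A -> y \in B -> x + y \in U.
Proof. by move=> xA yB; rewrite mem_undup; apply: (allpairs_f (fun x y => x + y)). Qed.

Lemma r_U z : r z != 0 -> z \in U.
Proof.
rewrite r_seq => h.
have : has (fun x => p x * q (z - x) != 0) A.
  apply/negPn/negP => /hasPn H; move/negP: h; apply; apply/eqP.
  by apply: big1_seq => x /andP[_ xA]; apply/eqP/negPn; exact: H x xA.
case/hasP => x xA; rewrite mulf_eq0 negb_or => /andP[_ hq0].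
have -> : z = x + (z - x) by rewrite addrC subrK.
by apply: mem_U => //; rewrite mem_sup.
Qed.

Lemma xyx (x y : G) : x + y - x = y.
Proof. by rewrite addrAC subrr add0r. Qed.

Lemma q_reindex x (g : G -> R) : x \in A ->
  \sum_(z <- U) q (z - x) * g z = \sum_(y <- B) q y * g (x + y).
Proof.
move=> xA; rewrite (@reindex_sum _ _ B U (fun y => x + y)).
- by apply: eq_bigr => y _; rewrite xyx.
- exact: sup_uniq.
- exact: U_uniq.
- by move=> y y' /addrI.
- by move=> y yB; apply: mem_U.
- move=> z zU; apply: contraNeq; rewrite mulf_eq0 negb_or => /andP[h _].
  apply/mapP; exists (z - x); first by rewrite mem_sup.
  by rewrite addrC subrK.
Qed.

Lemma sum_U_q x : x \in A -> \sum_(z <- U) q (z - x) = 1.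
Proof.
move=> xA; have := q_reindex (fun=> 1) xA.
under eq_bigr do rewrite mulr1.
by move=> ->; under eq_bigr do rewrite mulr1; rewrite sum_sup.
Qed.

Lemma sum_U_r : \sum_(z <- U) r z = 1.
Proof.
under eq_bigr do rewrite r_seq.
rewrite exchange_big /= -(sum_sup hp); apply: eq_big_seq => x xA.
by rewrite -mulr_sumr sum_U_q // mulr1.
Qed.

Definition D x := \sum_(z <- U) q (z - x) * (ln (q (z - x)) - ln (r z)).

Lemma qr_pos x z : x \in A -> 0 < q (z - x) -> 0 < r z.
Proof.
move=> xA h; apply: lt_le_trans (r_ge_term z xA).
by rewrite mulr_gt0 // sup_gt0.
Qed.

Lemma D_ge0 x : x \in A -> 0 <= D x.
Proof.
move=> xA.
have H : \sum_(z <- U) (q (z - x) - r z) <= D x.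
  rewrite /D; apply: ler_sum => z _.
  by apply: gibbs_pt; [apply: q_ge0 | apply: r_ge0 | apply: qr_pos].
by rewrite sumrB sum_U_q // sum_U_r subrr in H.
Qed.

Lemma D_avg : \sum_(x <- A) p x * D x = entropy r - entropy q.
Proof.
have hB : forall y, q y != 0 -> y \in B by move=> y; rewrite mem_sup.
rewrite (entropy_seq U_uniq r_U) (entropy_seq (sup_uniq q) hB).
under [X in _ = X - _]eq_bigr do rewrite lnV0 ?r_ge0 // mulrN.
under [X in _ = _ - X]eq_bigr do rewrite lnV0 ?q_ge0 // mulrN.
rewrite !sumrN opprK addrC.
have e1 : forall x, x \in A -> p x * D x =
    p x * \sum_(y <- B) q y * ln (q y) - \sum_(z <- U) p x * q (z - x) * ln (r z).
  move=> x xA; rewrite /D.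
  have e0 : \sum_(z <- U) q (z - x) * ln (q (z - x)) = \sum_(y <- B) q y * ln (q y).
    by rewrite (q_reindex (fun z => ln (q (z - x)))) //; apply: eq_bigr => y _; rewrite xyx.
  rewrite -e0 !mulr_sumr -sumrB; apply: eq_bigr => z _; ring.
rewrite (eq_big_seq _ e1) sumrB -mulr_suml sum_sup // mul1r.
congr (_ - _); rewrite exchange_big /=; apply: eq_bigr => z _.
by rewrite r_seq mulr_suml.
Qed.

Lemma TV x : x \in A -> D x <= 1/8 -> \sum_(z <- U) `|q (z - x) - r z| <= 17/24.
Proof.
move=> xA hD.
have H : \sum_(z <- U) `|q (z - x) - r z| <=
   \sum_(z <- U) (3 * (q (z - x) * (ln (q (z - x)) - ln (r z)) + r z - q (z - x))
                  + (q (z - x) + r z) / 6).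
  apply: ler_sum => z _.
  by apply: tv_pt; [apply: q_ge0 | apply: r_ge0 | apply: qr_pos].
set X := fun z => q (z - x) * (ln (q (z - x)) - ln (r z)).
have e : \sum_(z <- U) (3 * (X z + r z - q (z - x)) + (q (z - x) + r z) / 6) =
   \sum_(z <- U) (3 * X z) + \sum_(z <- U) (19/6 * r z) - \sum_(z <- U) (17/6 * q (z - x)).
  by rewrite -big_split /= -sumrB; apply: eq_bigr => z _; field.
rewrite e -!mulr_sumr sum_U_q // sum_U_r mulr1 mulr1 in H.
rewrite -[\sum_(z <- U) X z]/(D x) in H.
lra.
Qed.

Section Bohr.
Local Open Scope complex_scope.
Variables (eps : R) (gam : G -> R[i]).
Hypotheses (eps0 : 0 < eps) (hg : LSpec q eps gam).

Let cc y := complex.Re (gam y).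
Let dd y := complex.Im (gam y).
Let mc := \sum_(y <- B) q y * cc y.
Let md := \sum_(y <- B) q y * dd y.

Lemma gamE y : gam y = cc y +i* dd y.
Proof. by rewrite /cc /dd; case: (gam y). Qed.

Lemma gam_norm y : cc y ^+ 2 + dd y ^+ 2 = 1.
Proof.
case: hg => [[_ hn] _]; have := hn y; rewrite gamE /= => h.
by rewrite -[LHS]sqr_sqrtr ?addr_ge0 ?sqr_ge0 // h expr1n.
Qed.

Lemma gam_mul x y : gam (x + y) = (gam x * gam y)%R.
Proof. by case: hg => [[hm _] _]. Qed.

Lemma fourier_seq (s : seq G) :
  (\sum_(x <- s) (q x)%:C * conjc (gam x) =
   (\sum_(x <- s) q x * cc x) +i* (\sum_(x <- s) - (q x * dd x)))%R.
Proof.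
elim: s => [|x s IH]; first by rewrite !big_nil.
by rewrite !big_cons IH gamE; simpc.
Qed.

Lemma fourier_B : fourier q gam = (mc +i* (- md))%R.
Proof.
rewrite /fourier (@fsum_seq _ _ _ q _ B).
- by rewrite fourier_seq sumrN.
- exact: sup_uniq.
- by move=> x; rewrite mem_sup.
- by move=> x ->; rewrite rmorph0 mul0r.
Qed.

Lemma spec_bound : (1 - eps ^+ 2 / 2 <= mc ^+ 2 + md ^+ 2)%R.
Proof.
case: hg => _; rewrite fourier_B /= sqr_sqrtr ?addr_ge0 ?sqr_ge0 //.
by rewrite sqrrN.
Qed.

Definition badp y := (4 * eps ^+ 2 < (cc y - mc) ^+ 2 + (dd y - md) ^+ 2)%R.
Definition ind y : R := if badp y then 1 else 0.

Lemma var_eq : (\sum_(y <- B) q y * ((cc y - mc) ^+ 2 + (dd y - md) ^+ 2)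
   = 1 - mc ^+ 2 - md ^+ 2)%R.
Proof.
have e : forall y, (q y * ((cc y - mc) ^+ 2 + (dd y - md) ^+ 2) =
   q y * (cc y ^+ 2 + dd y ^+ 2) - 2 * mc * (q y * cc y) - 2 * md * (q y * dd y)
   + (mc ^+ 2 + md ^+ 2) * q y)%R.
  by move=> y; ring.
under eq_bigr do rewrite e gam_norm mulr1.
rewrite big_split /= sumrB sumrB -!mulr_sumr sum_sup //.
rewrite -/mc -/md; ring.
Qed.

Lemma bad_mass : (\sum_(y <- B) q y * ind y <= 1 / 8)%R.
Proof.
have H : (\sum_(y <- B) (4 * eps ^+ 2) * (q y * ind y) <=
          \sum_(y <- B) q y * ((cc y - mc) ^+ 2 + (dd y - md) ^+ 2))%R.
  apply: ler_sum => y _; rewrite /ind; case: ifP => hb.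
    rewrite mulr1 mulrC ler_wpM2l ?q_ge0 //; exact: ltW.
  by rewrite mulr0 mulr0 mulr_ge0 ?q_ge0 // addr_ge0 ?sqr_ge0.
rewrite var_eq -mulr_sumr in H.
have := spec_bound => h2.
have e2 : (0 < eps ^+ 2)%R by rewrite exprn_gt0.
nra.
Qed.

Lemma ind_reindex x : x \in A ->
  (\sum_(z <- U) q (z - x) * ind (z - x) = \sum_(y <- B) q y * ind y)%R.
Proof.
move=> xA; rewrite (q_reindex (fun z => ind (z - x))) //.
by apply: eq_bigr => y _; rewrite xyx.
Qed.

Lemma overlap s t : s \in A -> t \in A -> (D s <= 1/8)%R -> (D t <= 1/8)%R ->
  exists z, [/\ (0 < q (z - s))%R, (0 < q (z - t))%R, ~~ badp (z - s) & ~~ badp (z - t)].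
Proof.
move=> sA tA hs ht.
pose a z := q (z - s); pose b z := q (z - t).
pose M2 z := (a z + b z - `|a z - b z|)%R.
have hab : (\sum_(z <- U) `|a z - b z| <= 17/12)%R.
  have H : (\sum_(z <- U) `|a z - b z| <=
      \sum_(z <- U) (`|q (z - s) - r z| + `|q (z - t) - r z|))%R.
    by apply: ler_sum => z _; rewrite (distrC (q (z - t))); apply: ler_distD.
  rewrite big_split /= in H; have := TV sA hs; have := TV tA ht; lra.
have hM : (7/12 <= \sum_(z <- U) M2 z)%R.
  rewrite /M2 sumrB big_split /= /a /b !sum_U_q //; lra.
have ha z : (M2 z <= 2 * a z)%R.
  by rewrite /M2; have := ler_norm (b z - a z); rewrite distrC; lra.
have hb z : (M2 z <= 2 * b z)%R.
  by rewrite /M2; have := ler_norm (a z - b z); lra.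
have : has (fun z => (0 < M2 z)%R && ~~ badp (z - s) && ~~ badp (z - t)) U.
  apply/negPn/negP => /hasPn H.
  have H2 : (\sum_(z <- U) M2 z <=
     \sum_(z <- U) (2 * (q (z - s) * ind (z - s)) + 2 * (q (z - t) * ind (z - t))))%R.
    rewrite big_seq [X in (_ <= X)%R]big_seq; apply: ler_sum => z zU.
    have h := H z zU; rewrite /ind.
    have q1 := q_ge0 (z - s); have q2 := q_ge0 (z - t).
    have := ha z; have := hb z; rewrite /a /b => hb' ha'.
    case E1: (badp (z - s)); case E2: (badp (z - t)); rewrite ?mulr1 ?mulr0; try lra.
    by rewrite E1 E2 /= !andbT -leNgt in h; lra.
  rewrite [X in (_ <= X)%R]big_split /= -!mulr_sumr !ind_reindex // in H2.
  have := bad_mass; lra.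
case/hasP => z zU /andP[/andP[hm g1] g2].
exists z; split => //.
- by have := ha z; rewrite /a; lra.
- by have := hb z; rewrite /b; lra.
Qed.

Lemma good_norm u : ~~ badp u -> (Normc.normc (gam u - (mc +i* md)) <= 2 * eps)%R.
Proof.
rewrite /badp -leNgt gamE => h.
have -> : (cc u +i* dd u - (mc +i* md) = (cc u - mc) +i* (dd u - md))%R by [].
rewrite /=; apply: le_trans (ler_wsqrtr h) _.
have -> : (4 * eps ^+ 2 = (2 * eps) ^+ 2)%R by ring.
by rewrite sqrtr_sqr ger0_norm // mulr_ge0 // ltW.
Qed.

Lemma bohr_st s t : s \in A -> t \in A -> (D s <= 1/8)%R -> (D t <= 1/8)%R ->
  (Normc.normc (gam (s - t) - 1) <= 4 * eps)%R.
Proof.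
move=> sA tA hs ht; have [z [q1 q2 g1 g2]] := overlap sA tA hs ht.
have n1 : Normc.normc (gam (z - s)) = 1%R.
  by case: hg => [[_ hn] _]; apply: hn.
have e : (gam (s - t) * gam (z - s) = gam (z - t))%R.
  by rewrite -gam_mul addrC addrA subrK.
have -> : Normc.normc (gam (s - t) - 1) = Normc.normc ((gam (s - t) - 1) * gam (z - s)).
  by rewrite Normc.normcM n1 mulr1.
rewrite mulrBl mul1r e.
have -> : (gam (z - t) - gam (z - s) =
   (gam (z - t) - (mc +i* md)) + - (gam (z - s) - (mc +i* md)))%R.
  by rewrite opprB addrA subrK.
apply: le_trans (le_normcD _ _) _; rewrite normcN.
have := good_norm g1; have := good_norm g2; lra.
Qed.

End Bohr.

End Part1.

Theorem proposition4p2 (R : realType) (G : zmodType) (pX pY pZ : G -> R) (eps : R) :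
  is_fdist pX -> is_fdist pY -> is_fdist pZ ->
  entropy (conv pX pY) - entropy pY <= 1 / 16 ->
  0 < eps < 1 ->
  exists S : seq G,
    [/\ uniq S, S != [::],
        (forall s, s \in S -> 0 < pX s),
        entropy pZ - 4 * rdist pX pZ - 2 * ln 2 <= ln (size S)%:R
      & forall s t, s \in S -> t \in S -> Bohr (LSpec pY eps) (4 * eps) (s - t)].
Proof.
move=> hp hq hz hH /andP[eps0 _].
set P := fun x => D pX pY x <= 1 / 8.
set S := [seq x <- sup pX | P x].
set T := [seq x <- sup pX | ~~ P x].
have uA := sup_uniq pX.
have split (f : G -> R) : \sum_(x <- sup pX) f x = \sum_(x <- S) f x + \sum_(x <- T) f x.
  by rewrite (bigID P) /= /S /T !big_filter.
have hT : \sum_(x <- T) pX x <= 1 / 2.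
  have H1 : \sum_(x <- T) pX x * (1 / 8) <= \sum_(x <- T) pX x * D pX pY x.
    rewrite big_seq [X in _ <= X]big_seq; apply: ler_sum => x.
    rewrite mem_filter => /andP[hx _].
    have p0 : 0 <= pX x by case: hp.
    rewrite ler_wpM2l //; rewrite /P -ltNge in hx; exact: ltW.
  have H2 : \sum_(x <- S) pX x * D pX pY x >= 0.
    rewrite big_seq; apply: sumr_ge0 => x; rewrite mem_filter => /andP[_ xA].
    by rewrite mulr_ge0 ?(D_ge0 hp hq) //; case: hp.
  have := D_avg hp hq; rewrite split => E.
  rewrite -mulr_suml in H1; lra.
have hS : 1 / 2 <= \sum_(x <- S) pX x.
  have := sum_sup hp; rewrite split; lra.
have S0 : S != [::].
  by apply/eqP => E; move: hS; rewrite E big_nil; lra.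
exists S; split.
- exact: filter_uniq.
- exact: S0.
- by move=> s; rewrite mem_filter => /andP[_ sA]; apply: sup_gt0.
- exact: part2.
- move=> s t; rewrite !mem_filter => /andP[hs sA] /andP[ht tA] g hg.
  exact: (bohr_st hp hq eps0 hg sA tA hs ht).
Qed.
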